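(* Let $g\ge1$, $A=\begin{pmatrix}0&0\\1&0\end{pmatrix}$, $\mathcal M_A=\{X(\lambda)=\lambda^{g+1}A+\sum_{i=0}^g\lambda^iX_i\mid X_i\in\mathfrak{sl}(2)\}$ with the compatible Poisson tensors $P_0,P_1$ of the context, and $P_\lambda=P_1-\lambda P_0$. Let $H(\lambda)=\tfrac12\mathrm{Tr}\,X(\lambda)^2=\sum_{i=0}^{2g+1}H_i\lambda^i$. Then $H(\lambda)$ is a Casimir of the Poisson pencil, i.e. $P_\lambda\,dH(\lambda)=0$ identically in $\lambda$; in particular $P_0dH_{i-1}=P_1dH_i$ for all $i\ge1$. Moreover, for each $i$ with $1\le i\le 2g+1$, the bi-Hamiltonian vector field $Y_{g-i}:=P_0\,dH_{i-1}=P_1\,dH_i$ has the Lax representation $$\frac{dX(\lambda)}{dt}=\big[(\lambda^{-i}X(\lambda))_+,X(\lambda)\big],$$ where $(\cdot)_+$ denotes the projection onto nonnegative powers of $\lambda$.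
   Context: Tangent and cotangent spaces of $\mathcal M_A\cong\mathfrak{sl}(2)^{g+1}$ are identified with $\mathfrak{sl}(2)^{g+1}$ via the pairing $\langle(V_i),(W_i)\rangle=\sum_{i=0}^g\mathrm{Tr}(V_iW_i)$, and $dF=(\partial F/\partial X_0,\dots,\partial F/\partial X_g)$. Put $X_{g+1}:=A$ and $X_m:=0$ for $m>g+1$. $P_0:(W_0,\dots,W_g)\mapsto(\dot X_i)$ with $\dot X_i=\sum_{j=0}^{g-i}[X_{i+j+1},W_j]$; $P_1:(W_0,\dots,W_g)\mapsto(\dot X_i)$ with $\dot X_0=-[X_0,W_0]$ and $\dot X_i=\sum_{j=1}^{g+1-i}[X_{i+j},W_j]$ for $1\le i\le g$. Note $\tfrac12\mathrm{Tr}A^2=0$, so $H(\lambda)$ has degree at most $2g+1$ in $\lambda$. *)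

(* Defs.v *)
From HB Require Import structures.
From mathcomp Require Import all_boot all_order all_algebra.
From mathcomp Require Import all_classical all_reals.
From mathcomp Require Import topology normedtype derive.
Set Implicit Arguments. Unset Strict Implicit. Unset Printing Implicit Defensive.
Import Order.TTheory GRing.Theory Num.Theory.
Import numFieldNormedType.Exports.
Local Open Scope ring_scope.

Section Defs.
Variables (R : numFieldType) (g : nat).

(* points / tangent / cotangent vectors of M_A = sl(2)^(g+1): (X_0,...,X_g) *)
Definition tuple_sl := 'I_g.+1 -> 'M[R]_2.

Definition is_sl2 (M : 'M[R]_2) : Prop := \tr M = 0.

Definition Amat : 'M[R]_2 :=
  \matrix_(i < 2, j < 2) (if (i == 1 :> nat) && (j == 0 :> nat) then 1 else 0).

Definition lie (M N : 'M[R]_2) : 'M[R]_2 := M *m N - N *m M.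

Definition Xc (X : tuple_sl) (m : nat) : 'M[R]_2 :=
  if (m < g.+1)%N then X (inord m) else if m == g.+1 then Amat else 0.

Definition pairing (V W : tuple_sl) : R := \sum_(i < g.+1) \tr (V i *m W i).

Definition Xpoly (X : tuple_sl) : 'M[{poly R}]_2 :=
  'X^(g.+1) *: map_mx polyC Amat + \sum_(i < g.+1) 'X^i *: map_mx polyC (X i).

Definition Hpoly (X : tuple_sl) : {poly R} :=
  (2%:R^-1 : R) *: \tr (Xpoly X *m Xpoly X).
Definition Hcoef (i : nat) (X : tuple_sl) : R := (Hpoly X)`_i.

Definition is_grad (F : tuple_sl -> R) (X W : tuple_sl) : Prop :=
  (forall j, is_sl2 (W j)) /\
  forall V : tuple_sl, (forall j, is_sl2 (V j)) ->
    is_derive (0 : R^o) (1 : R^o)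
      (fun t : R^o => F (fun j => X j + t *: V j)) (pairing V W).

Definition P0 (X W : tuple_sl) : tuple_sl := fun i =>
  \sum_(j < g.+1 | (i + j <= g)%N) lie (Xc X (i + j + 1)) (W j).

Definition P1 (X W : tuple_sl) : tuple_sl := fun i =>
  if (i == 0 :> nat) then - lie (X i) (W i)
  else \sum_(j < g.+1 | (1 <= j)%N && (i + j <= g.+1)%N) lie (Xc X (i + j)) (W j).

(* dX(lambda)/dt for a vector field with components Y_0..Y_g (A is constant) *)
Definition dXdt (Y : tuple_sl) : 'M[{poly R}]_2 :=
  \sum_(k < g.+1) 'X^k *: map_mx polyC (Y k).

(* (lambda^{-i} M(lambda))_+ : projection onto nonnegative powers *)
Definition plus_part (i : nat) (M : 'M[{poly R}]_2) : 'M[{poly R}]_2 :=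
  map_mx (drop_poly i) M.

Definition lieP (M N : 'M[{poly R}]_2) : 'M[{poly R}]_2 := M *m N - N *m M.

End Defs.

(* Main.v *)
Require Import Defs.
From HB Require Import structures.
From mathcomp Require Import all_boot all_order all_algebra.
From mathcomp Require Import all_classical all_reals.
From mathcomp Require Import topology normedtype derive.
From mathcomp Require Import ring lra zify.
Import Order.TTheory GRing.Theory Num.Theory.
Import numFieldNormedType.Exports.
Local Open Scope ring_scope.

Section Gen.
Variable R : numFieldType.
Local Notation M := 'M[R]_2.

Lemma sum_trunc (V : zmodType) (f : nat -> V) m n :
  (forall j, (m <= j)%N -> f j = 0) ->
  \sum_(0 <= j < n) f j = \sum_(0 <= j < minn n m) f j.
Proof.
move=> H; case: (leqP n m) => h; first by [].
rewrite (@big_cat_nat _ _ _ m 0 n) /= ?(ltnW h) //.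
rewrite [X in _ + X]big1_seq ?addr0 // => j /andP[_]; rewrite mem_index_iota.
by case/andP => hj _; exact: H.
Qed.

Lemma sum_cond (V : zmodType) (f : nat -> V) p n :
  \sum_(0 <= j < n) (if (j < p)%N then f j else 0) = \sum_(0 <= j < minn n p) f j.
Proof.
rewrite (@sum_trunc _ _ p) => [|j hj]; last by rewrite ltnNge hj.
apply: eq_big_nat => j /andP[_]; rewrite leq_min => /andP[_ ->] //.
Qed.

Lemma sum_rev (V : zmodType) (F : nat -> nat -> V) k :
  \sum_(0 <= a < k.+1) F a (k - a)%N = \sum_(0 <= a < k.+1) F (k - a)%N a.
Proof.
rewrite big_nat_rev /=; apply: eq_big_nat => a /andP[_ ha].
by rewrite add0n subSS subKn.
Qed.

Definition lie' := @lie R.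

Lemma lie_anti (A B : M) : lie B A = - lie A B.
Proof. by rewrite /lie opprB. Qed.
Lemma lie_xx (A : M) : lie A A = 0.
Proof. by rewrite /lie subrr. Qed.
Lemma lie_x0 (A : M) : lie A 0 = 0.
Proof. by rewrite /lie mulmx0 mul0mx subrr. Qed.
Lemma lie_0x (A : M) : lie 0 A = 0.
Proof. by rewrite /lie mulmx0 mul0mx subrr. Qed.

Lemma lie_lin (A : M) n (c : nat -> R) (N : nat -> M) :
  lie A (\sum_(i < n) c i *: N i) = \sum_(i < n) c i *: lie A (N i).
Proof.
rewrite /lie mulmx_sumr mulmx_suml -sumrB; apply: eq_bigr => i _.
by rewrite scalerBr scalemxAr scalemxAl.
Qed.

Lemma half_eq0 (S : M) : S = - S -> S = 0.
Proof.
move=> E; have h2 : (2%:R : R) != 0 by rewrite pnatr_eq0.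
have : (2%:R : R) *: S = 0 by rewrite scaler_nat mulr2n {2}E subrr.
by move/(congr1 (fun Y => (2%:R : R)^-1 *: Y)); rewrite scalerA mulVf // scale1r scaler0.
Qed.

Lemma conv0 (x : nat -> M) k :
  \sum_(0 <= a < k.+1) lie (x a) (x (k - a)%N) = 0.
Proof.
apply: half_eq0; rewrite {1}(@sum_rev _ (fun a b => lie (x a) (x b))) -sumrN.
by apply: eq_bigr => a _; rewrite lie_anti.
Qed.

Definition coefm k (P : 'M[{poly R}]_2) : M := \matrix_(r, c) (P r c)`_k.

Lemma coefm_inj P Q : (forall k, coefm k P = coefm k Q) -> P = Q.
Proof.
move=> H; apply/matrixP => r c; apply/polyP => k.
by have /matrixP/(_ r c) := H k; rewrite !mxE.
Qed.

Lemma coefmB k P Q : coefm k (P - Q) = coefm k P - coefm k Q.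
Proof. by apply/matrixP => r c; rewrite !mxE coefB. Qed.
Lemma coefmD k P Q : coefm k (P + Q) = coefm k P + coefm k Q.
Proof. by apply/matrixP => r c; rewrite !mxE coefD. Qed.

Lemma coefm_sum k n (F : 'I_n -> 'M[{poly R}]_2) :
  coefm k (\sum_(i < n) F i) = \sum_(i < n) coefm k (F i).
Proof.
apply/matrixP => r c; rewrite !mxE summxE coef_sum summxE.
by apply: eq_bigr => i _; rewrite mxE.
Qed.

Lemma coefmXC k m (F : M) :
  coefm k ('X^m *: map_mx polyC F) = if k == m then F else 0.
Proof.
apply/matrixP => r c; rewrite !mxE coefXnM coefC.
have [h|h|->] := ltngtP k m.
- by rewrite !mxE.
- by rewrite mxE subn_eq0 leqNgt h.
- by rewrite subnn.
Qed.

Lemma coefmM P Q k :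
  coefm k (P *m Q) = \sum_(0 <= a < k.+1) coefm a P *m coefm (k - a)%N Q.
Proof.
apply/matrixP => r c; rewrite big_mkord !mxE summxE coef_sum.
rewrite (eq_bigr _ (fun l _ => coefM _ _ _)) exchange_big /=.
by apply: eq_bigr => a _; rewrite !mxE; apply: eq_bigr => l _; rewrite !mxE.
Qed.

Lemma coef_tr k (P : 'M[{poly R}]_2) : (\tr P)`_k = \tr (coefm k P).
Proof. by rewrite /mxtrace coef_sum; apply: eq_bigr => i _; rewrite mxE. Qed.

Lemma coefm_pp i k P : coefm k (plus_part i P) = coefm (k + i) P.
Proof. by apply/matrixP => r c; rewrite !mxE coef_drop_poly. Qed.

Lemma coefm_osum n (F : 'I_n.+1 -> M) k :
  coefm k (\sum_(i < n.+1) 'X^i *: map_mx polyC (F i)) =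
  if (k < n.+1)%N then F (inord k) else 0.
Proof.
rewrite coefm_sum (eq_bigr _ (fun i _ => coefmXC _ _ _)).
case: ifP => hk.
  rewrite (bigD1 (inord k)) //= inordK // eqxx big1 ?addr0 // => i hi.
  case: eqP => // e; move: hi; rewrite e.
  by rewrite inord_val eqxx.
by rewrite big1 // => i _; case: eqP => // e; move: hk; rewrite e ltn_ord.
Qed.


Lemma split_sum (V : zmodType) (F : nat -> V) i k :
  \sum_(0 <= c < i + k) F c = \sum_(0 <= c < i) F c + \sum_(0 <= a < k) F (i + a)%N.
Proof. by rewrite !big_mkord big_split_ord. Qed.

End Gen.
Arguments lie_anti {R}.
Arguments lie_xx {R}.
Arguments lie_x0 {R}.
Arguments lie_0x {R}.
Arguments lie_lin {R}.
Arguments half_eq0 {R}.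
Arguments conv0 {R}.
Arguments coefm {R}.
Arguments coefm_inj {R}.
Arguments coefmB {R}.
Arguments coefmD {R}.
Arguments coefm_sum {R}.
Arguments coefmXC {R}.
Arguments coefmM {R}.
Arguments coef_tr {R}.
Arguments coefm_pp {R}.
Arguments coefm_osum {R}.

Section Alg.
Variables (R : numFieldType) (g : nat) (X : tuple_sl R g).
Local Notation x := (Xc X).

Lemma x_big m : (g.+1 < m)%N -> x m = 0.
Proof.
move=> h; rewrite /Xc ltnNge (ltnW h) /= gtn_eqF //.
Qed.

Lemma x_ord (j : 'I_g.+1) : x j = X j.
Proof. by rewrite /Xc ltn_ord inord_val. Qed.

Definition dHn n (j : nat) : 'M[R]_2 := if (j <= n)%N then x (n - j) else 0.
Definition dHe n : tuple_sl R g := fun j => dHn n j.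

Lemma claim3 n (k : 'I_g.+1) : P0 X (dHe n) k = P1 X (dHe n.+1) k.
Proof.
rewrite /P0 /P1; case: eqP => [k0|kn0].
- have e := conv0 x n.+1.
  rewrite big_nat_recl // subn0 in e.
  move/eqP: e; rewrite addr_eq0 => /eqP e.
  rewrite -x_ord k0 {2}/dHe /dHn k0 subn0 e opprK.
  transitivity (\sum_(0 <= j < g.+1) lie (x j.+1) (dHn n j)).
    rewrite big_mkord; apply: eq_big => j.
      by rewrite add0n -ltnS ltn_ord.
    by rewrite add0n addn1.
  rewrite (eq_bigr (fun j => if (j < n.+1)%N then lie (x j.+1) (x (n - j)) else 0)); last first.
    by move=> j _; rewrite /dHn ltnS; case: ifP => // _; rewrite lie_x0.
  rewrite sum_cond (@sum_trunc _ _ g.+1 n.+1) 1?[minn n.+1 _]minnC; last first.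
    by move=> j hj; rewrite x_big ?lie_0x.
  by apply: eq_bigr => j _; rewrite subSS.
- rewrite big_mkcond [RHS]big_mkcond big_ord_recr big_ord_recl /=.
  have -> : (k + g <= g)%N = false.
    by apply/negbTE; rewrite -ltnNge -{1}(add0n g) ltn_add2r lt0n; apply/eqP.
  rewrite addr0 add0r; apply: eq_bigr => j _.
  rewrite /dHe /dHn lift0 /bump leq0n add1n /= subSS addn1 addnS ltnS.
  by [].
Qed.

Lemma P1_dH0 k : P1 X (dHe 0) k = 0.
Proof.
rewrite /P1; case: eqP => [k0|_].
  by rewrite /dHe /dHn -x_ord k0 /= lie_xx oppr0.
by rewrite big1 // => j /andP[h1 _]; rewrite /dHe /dHn leqNgt h1 lie_x0.
Qed.

Lemma P0_dHtop k : P0 X (dHe (2 * g + 1)) k = 0.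
Proof.
rewrite /P0 big1 // => j hj; rewrite /dHe /dHn.
case: ifP => _; last exact: lie_x0.
have [hb|hb] := ltnP g.+1 (2 * g + 1 - j); first by rewrite (@x_big (2 * g + 1 - j)) // lie_x0.
have := ltn_ord j; have := ltn_ord k => hk hj'.
have -> : (2 * g + 1 - j = g.+1)%N by lia.
have -> : (k + j + 1 = g.+1)%N by lia.
by rewrite lie_xx.
Qed.

Lemma P1_lin (c : nat -> R) (W : nat -> tuple_sl R g) n k :
  P1 X (fun j => \sum_(i < n) c i *: W i j) k = \sum_(i < n) c i *: P1 X (W i) k.
Proof.
rewrite /P1 /=; case: eqP => _.
  by rewrite (lie_lin (X k) n c (fun i => W i k)) -sumrN; apply: eq_bigr => i _; rewrite scalerN.
rewrite (eq_bigr _ (fun (j : 'I_g.+1) _ => lie_lin (x (k + j)) n c (fun i => W i j))) exchange_big.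
by apply: eq_bigr => i _; rewrite scaler_sumr.
Qed.

Lemma P0_lin (c : nat -> R) (W : nat -> tuple_sl R g) n k :
  P0 X (fun j => \sum_(i < n) c i *: W i j) k = \sum_(i < n) c i *: P0 X (W i) k.
Proof.
rewrite /P0 /= (eq_bigr _ (fun (j : 'I_g.+1) _ => lie_lin (x (k + j + 1)) n c (fun i => W i j))) exchange_big.
by apply: eq_bigr => i _; rewrite scaler_sumr.
Qed.

Lemma claim2 (lam : R) (k : 'I_g.+1) :
  let dHl : tuple_sl R g := fun j => \sum_(i < (2 * g + 2)%N) lam ^+ i *: dHe i j in
  P1 X dHl k - lam *: P0 X dHl k = 0.
Proof.
move=> dHl; rewrite /dHl (P1_lin (fun i => lam ^+ i) dHe) (P0_lin (fun i => lam ^+ i) dHe).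
have -> : (2 * g + 2 = (2 * g + 1).+1)%N by lia.
rewrite big_ord_recl big_ord_recr /= P1_dH0 P0_dHtop.
rewrite !scaler0 add0r addr0 scaler_sumr; apply/eqP; rewrite subr_eq0; apply/eqP; apply: eq_bigr => i _.
by rewrite /bump leq0n add1n scalerA -exprS claim3.
Qed.

Lemma Xpoly_coef k : coefm k (Xpoly X) = x k.
Proof.
rewrite /Xpoly coefmD coefmXC coefm_osum /Xc.
case: (ltnP k g.+1) => h; first by rewrite (ltn_eqF h) add0r.
by rewrite addr0.
Qed.

Lemma claim4 i : (1 <= i)%N ->
  dXdt (P1 X (dHe i)) = lieP (plus_part i (Xpoly X)) (Xpoly X).
Proof.
move=> hi; apply: coefm_inj => k.
rewrite /lieP coefmB !coefmM /dXdt coefm_osum.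
have E : \sum_(0 <= a < k.+1) coefm a (plus_part i (Xpoly X)) *m coefm (k - a) (Xpoly X)
   - \sum_(0 <= a < k.+1) coefm a (Xpoly X) *m coefm (k - a) (plus_part i (Xpoly X))
   = \sum_(0 <= a < k.+1) lie (x (a + i)) (x (k - a)).
  rewrite [X in _ - X](@sum_rev _ (fun a b => coefm a (Xpoly X) *m coefm b (plus_part i (Xpoly X)))).
  rewrite -sumrB; apply: eq_bigr => a _.
  by rewrite !coefm_pp !Xpoly_coef.
rewrite E.
case: (posnP k) => [k0|kpos].
  rewrite k0 /= big_nat1 subnn add0n /P1 inordK //= /dHe /dHn inordK //= subn0.
  have -> : X (inord 0) = x 0 by []. by rewrite [RHS]lie_anti.
have S := conv0 x (k + i).
have e1 : ((k + i).+1 = i + k.+1)%N by lia.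
rewrite e1 in S.
rewrite split_sum in S.
have TU : \sum_(0 <= a < k.+1) lie (x (a + i)) (x (k - a))
   = - \sum_(0 <= c < i) lie (x c) (x (k + i - c)).
  apply/eqP; rewrite -addr_eq0 addrC; apply/eqP; rewrite -[RHS]S; congr (_ + _).
  by apply: eq_bigr => a _; rewrite addnC [(k + i)%N]addnC subnDl.
rewrite TU.
case: (ltnP k g.+1) => hk; last first.
  rewrite big1_seq ?oppr0 // => c; rewrite mem_index_iota => /andP[_ hc].
  by rewrite (@x_big (k + i - c)) ?lie_x0 //; lia.
rewrite /P1 inordK // (negbTE (lt0n_neq0 kpos)).
rewrite -sumrN (eq_bigr (fun c => lie (x (k + i - c)) (x c))); last first.
  by move=> c _; rewrite lie_anti opprK.
rewrite big_nat_rev /=.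
set f := fun c => lie (x (k + c.+1)) (x (i - c.+1)).
rewrite (eq_big_nat _ _ (F2 := f)); last first.
  move=> c /andP[_ hc]; rewrite /f add0n.
  by have -> : (k + i - (i - c.+1) = k + c.+1)%N by lia.
rewrite big_mkcond big_ord_recl /= add0r.
transitivity (\sum_(0 <= j < g) (if (j < i)%N then f j else 0)).
  rewrite big_mkord; apply: eq_bigr => j _.
  rewrite /dHe /dHn /f lift0 /bump leq0n add1n.
  case: ifP => [_|/negbT h1]; first by case: ifP => // _; rewrite lie_x0.
  rewrite (@x_big (k + j.+1)) ?lie_0x; first by case: ifP.
  by move: h1; rewrite -ltnNge; lia.
rewrite sum_cond (@sum_trunc _ _ g i) 1?[minn i _]minnC // => j hj.
by rewrite /f x_big ?lie_0x //; lia.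
Qed.

End Alg.
Arguments dHe {R g}.
Arguments dHn {R g}.
Lemma quad_derive (R : numFieldType) (a0 a1 a2 : R) :
  is_derive (0 : R^o) (1 : R^o) (fun t : R^o => a0 + t * a1 + t ^+ 2 * a2) a1.
Proof.
have -> : (fun t : R^o => a0 + t * a1 + t ^+ 2 * a2) =
   (cst a0 + (id * (cst a1 + id * cst a2)) : R^o -> R^o).
  by apply: funext => t /=; rewrite mulrDr expr2 mulrA addrA.
apply: is_derive_eq.
rewrite /= !scale0r !add0r.
have -> : (cst a1 + id * cst a2 : R^o -> R^o) 0 = a1 by rewrite /= ?fctE mul0r addr0.
exact: mulr1.

Qed.

Section Grad.
Variables (R : numFieldType) (g : nat).

Lemma tr_delta (a b : 'I_2) (D : 'M[R]_2) : \tr (delta_mx a b *m D) = D b a.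
Proof.
rewrite /mxtrace (bigD1 a) //= big1 ?addr0.
  rewrite mxE (bigD1 b) //= big1 ?addr0; first by rewrite mxE !eqxx mul1r.
  by move=> l hl; rewrite mxE eqxx (negbTE hl) mul0r.
by move=> r hr; rewrite mxE big1 // => l _; rewrite mxE (negbTE hr) mul0r.
Qed.

Definition i0 : 'I_2 := @Ordinal 2 0 isT.
Definition i1 : 'I_2 := @Ordinal 2 1 isT.

Lemma ord2 (i : 'I_2) : i = i0 \/ i = i1.
Proof.
case: i => [[|[|m]] h]; [left|right|by []]; exact: val_inj.
Qed.

Lemma tr_delta1 (a b : 'I_2) : \tr (delta_mx a b : 'M[R]_2) = (b == a)%:R.
Proof. by rewrite -[delta_mx a b]mulmx1 tr_delta mxE. Qed.

Lemma tr2 (D : 'M[R]_2) : \tr D = D i0 i0 + D i1 i1.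
Proof.
rewrite /mxtrace big_ord_recl big_ord_recl big_ord0 addr0.
have -> : (ord0 : 'I_2) = i0 by apply: val_inj.
by have -> : (lift i0 ord0) = i1 by apply: val_inj.
Qed.

Lemma sl2_zero (D : 'M[R]_2) : \tr D = 0 ->
  (forall E : 'M[R]_2, \tr E = 0 -> \tr (E *m D) = 0) -> D = 0.
Proof.
move=> trD H.
have h10 := H (delta_mx i0 i1) (tr_delta1 _ _); rewrite tr_delta in h10.
have h01 := H (delta_mx i1 i0) (tr_delta1 _ _); rewrite tr_delta in h01.
have hd := H (delta_mx i0 i0 - delta_mx i1 i1).
rewrite linearB /= !tr_delta1 eqxx subrr mulmxBl linearB /= !tr_delta in hd.
have {}hd := hd erefl.
rewrite tr2 in trD.
have e00 : D i0 i0 = 0.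
  have : D i0 i0 *+ 2 == 0.
    have -> : D i0 i0 *+ 2 = (D i0 i0 - D i1 i1) + (D i0 i0 + D i1 i1) by rewrite mulr2n; ring.
    by rewrite hd trD addr0.
  by rewrite mulrn_eq0 /= => /eqP.
have e11 : D i1 i1 = 0 by move/eqP: hd; rewrite e00 sub0r oppr_eq0 => /eqP.
apply/matrixP => r c; rewrite mxE.
by case: (ord2 r) => ->; case: (ord2 c) => ->.
Qed.

Lemma grad_unique (W1 W2 : tuple_sl R g) :
  (forall j, is_sl2 (W1 j)) -> (forall j, is_sl2 (W2 j)) ->
  (forall V : tuple_sl R g, (forall j, is_sl2 (V j)) -> pairing V W1 = pairing V W2) ->
  W1 = W2.
Proof.
move=> h1 h2 H; apply: funext => j0; apply/eqP; rewrite -subr_eq0; apply/eqP.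
apply: sl2_zero.
  by rewrite linearB /= h1 h2 subrr.
move=> E hE.
have := H (fun j => if j == j0 then E else 0).
have hV : forall j, is_sl2 (if j == j0 then E else 0).
  by move=> j; case: eqP => _ //; rewrite /is_sl2 mxtrace0.
move=> /(_ hV) /eqP; rewrite -subr_eq0 /pairing -sumrB (bigD1 j0) //= big1.
  by rewrite eqxx addr0 -linearB /= -mulmxBr => /eqP.
by move=> j hj; rewrite (negbTE hj) !mul0mx mxtrace0 subrr.
Qed.

End Grad.

Section GradH.
Variables (R : numFieldType) (g : nat).

Lemma tr_sum n (F : nat -> 'M[R]_2) :
  \tr (\sum_(0 <= a < n) F a) = \sum_(0 <= a < n) \tr (F a).
Proof. exact: (big_morph _ (@mxtraceD _ _) (mxtrace0 _ _)). Qed.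

Lemma Hcoef_formula (Y : tuple_sl R g) i :
  Hcoef i Y = 2%:R^-1 * \sum_(0 <= a < i.+1) \tr (Xc Y a *m Xc Y (i - a)).
Proof.
rewrite /Hcoef /Hpoly coefZ coef_tr coefmM tr_sum; congr (_ * _).
by apply: eq_bigr => a _; rewrite !Xpoly_coef.
Qed.

Definition vc (V : tuple_sl R g) m : 'M[R]_2 :=
  if (m < g.+1)%N then V (inord m) else 0.

Lemma Xc_shift (X V : tuple_sl R g) (t : R) m :
  Xc (fun j => X j + t *: V j) m = Xc X m + t *: vc V m.
Proof.
by rewrite /Xc /vc; case: ifP => // _; case: ifP => _; rewrite scaler0 addr0.
Qed.

Lemma Hquad (X V : tuple_sl R g) i (t : R) :
  Hcoef i (fun j => X j + t *: V j) =
  Hcoef i X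
  + t * (2%:R^-1 * \sum_(0 <= a < i.+1)
           (\tr (Xc X a *m vc V (i - a)) + \tr (vc V a *m Xc X (i - a))))
  + t ^+ 2 * (2%:R^-1 * \sum_(0 <= a < i.+1) \tr (vc V a *m vc V (i - a))).
Proof.
rewrite !Hcoef_formula mulrCA [t ^+ 2 * _]mulrCA -!mulrDr; congr (_ * _).
rewrite !mulr_sumr -!big_split; apply: eq_bigr => a _ /=.
rewrite !Xc_shift !mulmxDl !mulmxDr -!scalemxAl -!scalemxAr !mxtraceD !mxtraceZ.
ring.
Qed.

End GradH.
Arguments vc {R g}.

Lemma a1_pairing (R : numFieldType) (g : nat) (X V : tuple_sl R g) i :
  2%:R^-1 * \sum_(0 <= a < i.+1)
      (\tr (Xc X a *m vc V (i - a)) + \tr (vc V a *m Xc X (i - a)))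
  = pairing V (dHe X i).
Proof.
rewrite big_split /=.
rewrite (@sum_rev _ (fun a b => \tr (Xc X a *m vc V b))).
have -> : \sum_(0 <= a < i.+1) \tr (Xc X (i - a) *m vc V a) =
          \sum_(0 <= a < i.+1) \tr (vc V a *m Xc X (i - a)).
  by apply: eq_bigr => a _; rewrite mxtrace_mulC.
rewrite -mulr2n -(mulr_natl (\sum_(0 <= a < i.+1) \tr (vc V a *m Xc X (i - a))) 2) mulrA mulVf ?pnatr_eq0 // mul1r.
have -> : pairing V (dHe X i) = \sum_(0 <= j < g.+1)
    (if (j < i.+1)%N then \tr (vc V j *m Xc X (i - j)) else 0).
  rewrite /pairing big_mkord; apply: eq_bigr => j _.
  rewrite /dHe /dHn ltnS /vc ltn_ord inord_val.
  by case: ifP => // _; rewrite mulmx0 mxtrace0.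
rewrite sum_cond (@sum_trunc _ _ g.+1 i.+1) 1?[minn i.+1 _]minnC // => j hj.
by rewrite /vc ltnNge hj /= mul0mx mxtrace0.
Qed.

Lemma Amat_tr (R : numFieldType) : \tr (Amat R) = 0.
Proof. by rewrite tr2 !mxE /= addr0. Qed.

Theorem mainTheorem5 (R : numFieldType) (g : nat) (hg : (1 <= g)%N)
  (X : tuple_sl R g) (hX : forall j, is_sl2 (X j))
  (dH : nat -> tuple_sl R g)
  (hdH : forall i, is_grad (Hcoef i) X (dH i)) :
  (* the differentials dH_i exist *)
  (forall i : nat, exists W : tuple_sl R g, is_grad (Hcoef i) X W) /\
  (* Casimir of the pencil: P_lambda dH(lambda) = 0 for every lambda *)
  (forall (lam : R) (k : 'I_g.+1),
     let dHl : tuple_sl R g :=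
       fun j => \sum_(i < (2 * g + 2)%N) lam ^+ i *: dH i j in
     P1 X dHl k - lam *: P0 X dHl k = 0) /\
  (* in particular P0 dH_{i-1} = P1 dH_i for all i >= 1 *)
  (forall i : nat, (1 <= i)%N -> forall k, P0 X (dH i.-1) k = P1 X (dH i) k) /\
  (* Lax representation of Y_{g-i} = P1 dH_i, 1 <= i <= 2g+1 *)
  (forall i : nat, (1 <= i <= 2 * g + 1)%N ->
     dXdt (P1 X (dH i)) =
       lieP (plus_part i (Xpoly X)) (Xpoly X)).
Proof.
have dHeq : forall i, dH i = dHe X i.
  move=> i; apply: grad_unique.
  - by case: (hdH i).
  - move=> j; rewrite /is_sl2 /dHe /dHn; case: ifP => _; last exact: mxtrace0.
    rewrite /Xc; case: ifP => _; first exact: hX.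
    by case: ifP => _; [exact: Amat_tr | exact: mxtrace0].
  - move=> V hV; have [_ H] := hdH i; have D := H V hV.
    have e : (fun t : R^o => Hcoef i (fun j => X j + t *: V j)) =
      (fun t : R^o => Hcoef i X
        + t * (2%:R^-1 * \sum_(0 <= a < i.+1)
           (\tr (Xc X a *m vc V (i - a)) + \tr (vc V a *m Xc X (i - a))))
        + t ^+ 2 * (2%:R^-1 * \sum_(0 <= a < i.+1) \tr (vc V a *m vc V (i - a)))).
      by apply: funext => t; exact: Hquad.
    rewrite e in D.
    rewrite -(@derive_val _ _ _ _ _ _ _ D) (@derive_val _ _ _ _ _ _ _ (quad_derive _ _ _ _)).
    exact: a1_pairing.
have E : dH = dHe X := funext dHeq.
subst dH.
split; first by move=> i; exists (dHe X i); exact: hdH.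
split; first by move=> lam k; exact: claim2.
split; first by move=> [|n] // _ k; exact: claim3.
by move=> i /andP[hi _]; exact: claim4.
Qed.
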